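(* Let $X$ be a metrizable space, $A$ a Hausdorff topological Abelian group, and $f:X\times I\to A$ a semi-layered function (case $p=1$). Then $F(x):=f(x,\cdot)$ defines a continuous map $F:X\to EA$, i.e. $F\in\mathcal{C}_{\mathrm{cts}}(X,EA)$.
   Context: Let $I=(0,1]$. $EA$ is the group of left-continuous step functions $I\to A$ with finitely many discontinuities, topologized as the direct limit of the subsets $E^{(n)}A$ (functions with at most $n$ discontinuities), where $E^{(n)}A$ is topologized as a quotient of $\Delta_n\times A^{n+1}$ ($\Delta_n$ the $n$-simplex, recording the jump positions and the values). A continuous dissection over $X$ is a family $\mathcal{F}$ of continuous functions $X\to[0,1]$ containing the constants $0,1$ which is locally finite (each point has a neighbourhood $U$ with $\{\xi|_U:\xi\in\mathcal{F}\}$ finite); l-complete means closed under pointwise max, min, and pointwise limits of convergent directed families. An $\mathcal{F}$-wedge is $\{(x,t):\xi_1(x)<t\le\xi_2(x)\}$ with $\xi_i\in\mathcal{F}$; minimal means nonempty and inclusion-minimal. With $\beta:X\times I\to X$ the projection, $f:X\times I\to A$ is semi-layered if for some l-complete continuous dissection $\mathcal{F}$, for every minimal $\mathcal{F}$-wedge $C$ there is a continuous $f_C:\overline{\beta(C)}\to A$ with $f|_C=f_C\circ\beta|_C$. *)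

(* Defs.v *)
From Stdlib Require Import Reals List.
Open Scope R_scope.

Definition is_topology {X : Type} (O : (X -> Prop) -> Prop) : Prop :=
  O (fun _ => True) /\
  (forall U V, O U -> O V -> O (fun x => U x /\ V x)) /\
  (forall Fam : (X -> Prop) -> Prop,
      (forall U, Fam U -> O U) -> O (fun x => exists U, Fam U /\ U x)) /\
  (forall U V, O U -> (forall x, U x <-> V x) -> O V).

Definition R_open (U : R -> Prop) : Prop :=
  forall x, U x -> exists eps, eps > 0 /\ forall y, Rabs (y - x) < eps -> U y.

Definition continuous {X Y : Type} (OX : (X -> Prop) -> Prop)
  (OY : (Y -> Prop) -> Prop) (g : X -> Y) : Prop :=
  forall V, OY V -> OX (fun x => V (g x)).

Definition continuous_on {X Y : Type} (OX : (X -> Prop) -> Prop)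
  (OY : (Y -> Prop) -> Prop) (S : X -> Prop) (g : X -> Y) : Prop :=
  forall V, OY V -> exists U, OX U /\ forall x, S x -> (U x <-> V (g x)).

Definition closure {X : Type} (OX : (X -> Prop) -> Prop) (S : X -> Prop) (x : X)
  : Prop :=
  forall U, OX U -> U x -> exists y, U y /\ S y.

Definition metrizable {X : Type} (OX : (X -> Prop) -> Prop) : Prop :=
  exists d : X -> X -> R,
    (forall x y, 0 <= d x y) /\
    (forall x y, d x y = 0 <-> x = y) /\
    (forall x y, d x y = d y x) /\
    (forall x y z, d x z <= d x y + d y z) /\
    (forall U, OX U <->
       forall x, U x -> exists eps, eps > 0 /\ forall y, d x y < eps -> U y).

Definition hausdorff {A : Type} (OA : (A -> Prop) -> Prop) : Prop :=
  forall a b, a <> b -> exists U V, OA U /\ OA V /\ U a /\ V b /\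
     forall c, U c -> V c -> False.

(* Hausdorff topological Abelian group (A, plus, opp, zero, OA).  Continuity
   of plus : A x A -> A w.r.t. the product topology is written out. *)
Definition hausdorff_top_abelian_group {A : Type} (plus : A -> A -> A)
  (opp : A -> A) (zero : A) (OA : (A -> Prop) -> Prop) : Prop :=
  is_topology OA /\ hausdorff OA /\
  (forall a b c, plus a (plus b c) = plus (plus a b) c) /\
  (forall a b, plus a b = plus b a) /\
  (forall a, plus a zero = a) /\
  (forall a, plus a (opp a) = zero) /\
  (forall W a b, OA W -> W (plus a b) ->
     exists U V, OA U /\ OA V /\ U a /\ V b /\
       forall a' b', U a' -> V b' -> W (plus a' b')) /\
  continuous OA OA opp.

(* Elements of EA are represented as functions R -> A which vanish (= zero)
   outside I = (0,1].  *)
Definition restrictI {A : Type} (zero : A) (g : R -> A) : R -> A :=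
  fun t => if Rlt_dec 0 t then (if Rle_dec t 1 then g t else zero) else zero.

(* Delta_n modelled as {(s_1,...,s_n) : 0 <= s_1 <= ... <= s_n <= 1}
   (coordinates s i, 1 <= i <= n, of s : nat -> R; other coordinates unused). *)
Definition in_simplex (n : nat) (s : nat -> R) : Prop :=
  (forall i, (1 <= i <= n)%nat -> 0 <= s i <= 1) /\
  (forall i, (1 <= i < n)%nat -> s i <= s (S i)).

Fixpoint nb_below (m : nat) (s : nat -> R) (t : R) : nat :=
  match m with
  | O => O
  | S k => (nb_below k s t + (if Rlt_dec (s (S k)) t then 1 else 0))%nat
  end.

(* The quotient map phi_n : Delta_n x A^(n+1) -> E^(n)A : jumps at s_1..s_n,
   value a_k on (s_k, s_(k+1)] (s_0 = 0, s_(n+1) = 1); left continuous. *)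
Definition phi {A : Type} (zero : A) (n : nat) (s : nat -> R) (a : nat -> A)
  : R -> A :=
  restrictI zero (fun t => a (nb_below n s t)).

Definition in_EA {A : Type} (zero : A) (g : R -> A) : Prop :=
  exists n s a, in_simplex n s /\ forall t, g t = phi zero n s a t.

(* P is open in Delta_n x A^(n+1) (product of the subspace topology of
   Delta_n in R^n with the product topology of A^(n+1)). *)
Definition open_simplex_prod {A : Type} (OA : (A -> Prop) -> Prop) (n : nat)
  (P : (nat -> R) -> (nat -> A) -> Prop) : Prop :=
  forall s a, in_simplex n s -> P s a ->
    exists eps (V : nat -> A -> Prop), eps > 0 /\
      (forall i, (i <= n)%nat -> OA (V i) /\ V i (a i)) /\
      forall s' a', in_simplex n s' ->
        (forall i, (1 <= i <= n)%nat -> Rabs (s' i - s i) < eps) ->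
        (forall i, (i <= n)%nat -> V i (a' i)) -> P s' a'.

(* Open subsets of EA for the direct limit topology of the quotient topologies
   on the E^(n)A: U is open iff phi_n^{-1}(U) is open for every n. *)
Definition EA_open {A : Type} (zero : A) (OA : (A -> Prop) -> Prop)
  (U : (R -> A) -> Prop) : Prop :=
  forall n, open_simplex_prod OA n (fun s a => U (phi zero n s a)).

Definition continuous_dissection {X : Type} (OX : (X -> Prop) -> Prop)
  (F : (X -> R) -> Prop) : Prop :=
  (forall xi, F xi -> continuous OX R_open xi /\ forall x, 0 <= xi x <= 1) /\
  F (fun _ => 0) /\ F (fun _ => 1) /\
  (forall x, exists U, OX U /\ U x /\
     exists L : list (X -> R), forall xi, F xi ->
       exists eta, In eta L /\ forall y, U y -> xi y = eta y).

Definition l_complete {X : Type} (F : (X -> R) -> Prop) : Prop :=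
  (forall xi eta, F xi -> F eta -> F (fun x => Rmax (xi x) (eta x))) /\
  (forall xi eta, F xi -> F eta -> F (fun x => Rmin (xi x) (eta x))) /\
  (forall (L : Type) (le : L -> L -> Prop) (net : L -> X -> R) (g : X -> R),
     inhabited L ->
     (forall l, le l l) ->
     (forall l1 l2 l3, le l1 l2 -> le l2 l3 -> le l1 l3) ->
     (forall l1 l2, exists l3, le l1 l3 /\ le l2 l3) ->
     (forall l, F (net l)) ->
     (forall x eps, eps > 0 -> exists l0, forall l, le l0 l ->
         Rabs (net l x - g x) < eps) ->
     F g).

Definition wedge {X : Type} (xi1 xi2 : X -> R) (x : X) (t : R) : Prop :=
  xi1 x < t <= xi2 x.

Definition minimal_wedge {X : Type} (F : (X -> R) -> Prop) (xi1 xi2 : X -> R)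
  : Prop :=
  (exists x t, wedge xi1 xi2 x t) /\
  forall eta1 eta2, F eta1 -> F eta2 ->
    (exists x t, wedge eta1 eta2 x t) ->
    (forall x t, wedge eta1 eta2 x t -> wedge xi1 xi2 x t) ->
    forall x t, wedge xi1 xi2 x t -> wedge eta1 eta2 x t.

Definition wedge_proj {X : Type} (xi1 xi2 : X -> R) (x : X) : Prop :=
  exists t, wedge xi1 xi2 x t.

Definition semi_layered {X A : Type} (OX : (X -> Prop) -> Prop)
  (OA : (A -> Prop) -> Prop) (f : X -> R -> A) : Prop :=
  exists F : (X -> R) -> Prop,
    continuous_dissection OX F /\ l_complete F /\
    forall xi1 xi2, F xi1 -> F xi2 -> minimal_wedge F xi1 xi2 ->
      exists fC : X -> A,
        continuous_on OX OA (closure OX (wedge_proj xi1 xi2)) fC /\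
        forall x t, wedge xi1 xi2 x t -> f x t = fC x.

Definition curryEA {X A : Type} (zero : A) (f : X -> R -> A) (x : X) : R -> A :=
  restrictI zero (f x).

(* Main.v *)
Require Import Defs.
From Stdlib Require Import Reals.
From Stdlib Require Import Arith Lra Lia Classical ClassicalEpsilon FunctionalExtensionality List.
Open Scope R_scope.

Lemma nat_max_exists (P : nat -> Prop) (B : nat) :
  (forall k, P k -> (k <= B)%nat) -> (exists k, P k) ->
  exists k, P k /\ forall k', P k' -> (k' <= k)%nat.
Proof.
  revert P. induction B as [|B IH]; intros P HB [k0 Hk0].
  - exists k0; split; [auto|]. intros k' Hk'. pose proof (HB _ Hk'); pose proof (HB _ Hk0); lia.
  - destruct (classic (P (S B))) as [HS|HS].
    + exists (S B); split; auto.
    + apply IH; [|eauto]. intros k Hk. pose proof (HB _ Hk).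
      destruct (Nat.eq_dec k (S B)); [subst; contradiction|lia].
Qed.

Lemma fin_inter {X} (OX : (X->Prop)->Prop) (HX : is_topology OX) (x : X)
  (P : nat -> X -> Prop) (n : nat) :
  (forall i, (i <= n)%nat -> exists O, OX O /\ O x /\ forall y, O y -> P i y) ->
  exists O, OX O /\ O x /\ forall y, O y -> forall i, (i <= n)%nat -> P i y.
Proof.
  destruct HX as [Htop [Hint _]].
  induction n as [|n IH]; intros H.
  - destruct (H 0%nat (le_n 0)) as [O [HO [Ox HOP]]]. exists O; repeat split; auto.
    intros y Oy i Hi. assert (i = 0%nat) by lia. subst; auto.
  - destruct IH as [O1 [HO1 [O1x HO1P]]]. { intros i Hi; apply H; lia. }
    destruct (H (S n) (le_n _)) as [O2 [HO2 [O2x HO2P]]].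
    exists (fun y => O1 y /\ O2 y); repeat split; auto.
    intros y [? ?] i Hi. destruct (Nat.eq_dec i (S n)). subst; auto. apply HO1P; auto; lia.
Qed.

Lemma sup_in {X} (F : (X->R)->Prop) (HL : l_complete F)
  (Hb : forall xi, F xi -> forall x, 0 <= xi x <= 1)
  (P : (X->R)->Prop) (HPF : forall xi, P xi -> F xi)
  (HPmax : forall a b, P a -> P b -> P (fun x => Rmax (a x) (b x)))
  (p0 : X -> R) (Hp0 : P p0) :
  exists g, F g /\ (forall xi, P xi -> forall x, xi x <= g x) /\
     (forall x M, (forall xi, P xi -> xi x <= M) -> g x <= M).
Proof.
  assert (Hc : forall x, {m | is_lub (fun r => exists xi, P xi /\ r = xi x) m}).
  { intro x. apply completeness.
    - exists 1. intros r [xi [Hxi ->]]. apply (Hb xi (HPF _ Hxi)).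
    - exists (p0 x). exists p0; auto. }
  set (g := fun x => proj1_sig (Hc x)).
  assert (Hg : forall x, is_lub (fun r => exists xi, P xi /\ r = xi x) (g x)).
  { intro x. unfold g. destruct (Hc x); simpl; auto. }
  exists g. split; [|split].
  - destruct HL as [_ [_ Hnet]].
    apply (Hnet {xi | P xi} (fun a b => forall x, proj1_sig a x <= proj1_sig b x)
             (fun l => proj1_sig l) g).
    + constructor. exists p0; auto.
    + intros l x; lra.
    + intros l1 l2 l3 H12 H23 x. specialize (H12 x); specialize (H23 x); lra.
    + intros [a Ha] [b Hb']. exists (exist _ _ (HPmax a b Ha Hb')). simpl.
      split; intro x; [apply Rmax_l|apply Rmax_r].
    + intros [a Ha]; simpl; auto.
    + intros x eps Heps.
      destruct (classic (exists xi, P xi /\ g x - eps < xi x)) as [[xi [Hxi Hlt]]|Hno].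
      * exists (exist _ xi Hxi). intros [l Hl] Hle. simpl in *. specialize (Hle x).
        assert (l x <= g x). { apply (proj1 (Hg x)). exists l; auto. }
        apply Rabs_def1; lra.
      * exfalso. assert (g x <= g x - eps).
        { apply (proj2 (Hg x)). intros r [xi [Hxi ->]].
          apply Rnot_lt_le. intro. apply Hno. exists xi; auto. } lra.
  - intros xi Hxi x. apply (proj1 (Hg x)). exists xi; auto.
  - intros x M HM. apply (proj2 (Hg x)). intros r [xi [Hxi ->]]. auto.
Qed.

Lemma inf_in {X} (F : (X->R)->Prop) (HL : l_complete F)
  (Hb : forall xi, F xi -> forall x, 0 <= xi x <= 1)
  (P : (X->R)->Prop) (HPF : forall xi, P xi -> F xi)
  (HPmin : forall a b, P a -> P b -> P (fun x => Rmin (a x) (b x)))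
  (p0 : X -> R) (Hp0 : P p0) :
  exists g, F g /\ (forall xi, P xi -> forall x, g x <= xi x) /\
     (forall x M, (forall xi, P xi -> M <= xi x) -> M <= g x).
Proof.
  assert (Hc : forall x, {m | is_lub (fun r => exists xi, P xi /\ r = - xi x) m}).
  { intro x. apply completeness.
    - exists 0. intros r [xi [Hxi ->]]. pose proof (Hb xi (HPF _ Hxi) x). lra.
    - exists (- p0 x). exists p0; auto. }
  set (g := fun x => - proj1_sig (Hc x)).
  assert (Hg : forall x, is_lub (fun r => exists xi, P xi /\ r = - xi x) (- g x)).
  { intro x. unfold g. destruct (Hc x); simpl. rewrite Ropp_involutive; auto. }
  exists g. split; [|split].
  - destruct HL as [_ [_ Hnet]].
    apply (Hnet {xi | P xi} (fun a b => forall x, proj1_sig b x <= proj1_sig a x)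
             (fun l => proj1_sig l) g).
    + constructor. exists p0; auto.
    + intros l x; lra.
    + intros l1 l2 l3 H12 H23 x. specialize (H12 x); specialize (H23 x); lra.
    + intros [a Ha] [b Hb']. exists (exist _ _ (HPmin a b Ha Hb')). simpl.
      split; intro x; [apply Rmin_l|apply Rmin_r].
    + intros [a Ha]; simpl; auto.
    + intros x eps Heps.
      destruct (classic (exists xi, P xi /\ xi x < g x + eps)) as [[xi [Hxi Hlt]]|Hno].
      * exists (exist _ xi Hxi). intros [l Hl] Hle. simpl in *. specialize (Hle x).
        assert (- l x <= - g x). { apply (proj1 (Hg x)). exists l; auto. }
        apply Rabs_def1; lra.
      * exfalso. assert (- g x <= - (g x + eps)).
        { apply (proj2 (Hg x)). intros r [xi [Hxi ->]].
          assert (~ xi x < g x + eps) by (intro; apply Hno; exists xi; auto). lra. } lra.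
  - intros xi Hxi x. assert (- xi x <= - g x). { apply (proj1 (Hg x)). exists xi; auto. } lra.
  - intros x M HM. assert (- g x <= - M). { apply (proj2 (Hg x)). intros r [xi [Hxi ->]].
      specialize (HM xi Hxi). lra. } lra.
Qed.

Fixpoint cnt {T} (Q : T -> Prop) (l : list T) : nat :=
  match l with
  | nil => 0%nat
  | e :: l' => ((if excluded_middle_informative (Q e) then 1 else 0) + cnt Q l')%nat
  end.

Lemma cnt_le_len {T} (Q : T -> Prop) l : (cnt Q l <= length l)%nat.
Proof. induction l; simpl; [lia|]. destruct excluded_middle_informative; lia. Qed.

Lemma cnt_mono {T} (Q1 Q2 : T -> Prop) l : (forall e, Q1 e -> Q2 e) -> (cnt Q1 l <= cnt Q2 l)%nat.
Proof.
  intro H; induction l; simpl; [lia|].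
  destruct (excluded_middle_informative (Q1 a)); destruct (excluded_middle_informative (Q2 a));
    try lia. exfalso; auto.
Qed.

Lemma cnt_strict {T} (Q1 Q2 : T -> Prop) l e : (forall e0, Q1 e0 -> Q2 e0) -> In e l -> Q2 e -> ~ Q1 e ->
  (cnt Q1 l < cnt Q2 l)%nat.
Proof.
  intros H Hin H2 H1; induction l; simpl; [destruct Hin|].
  destruct Hin as [->|Hin].
  - pose proof (cnt_mono Q1 Q2 l H).
    destruct (excluded_middle_informative (Q1 e)); [contradiction|].
    destruct (excluded_middle_informative (Q2 e)); [lia|contradiction].
  - specialize (IHl Hin).
    destruct (excluded_middle_informative (Q1 a)); destruct (excluded_middle_informative (Q2 a));
      try lia. exfalso; auto.
Qed.

Definition chain {X} (F : (X->R)->Prop) (W : X -> Prop) (k : nat) (h : nat -> X -> R) : Prop :=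
  (forall j, (j <= k)%nat -> F (h j)) /\
  (forall y, W y -> h 0%nat y = 0 /\ h k y = 1) /\
  (forall j, (j < k)%nat -> (forall y, W y -> h j y <= h (S j) y) /\
                            exists y, W y /\ h j y < h (S j) y).

Lemma chain_bound {X} (F : (X->R)->Prop) (W : X -> Prop) (L : list (X -> R))
  (Hfin : forall xi, F xi -> exists eta, In eta L /\ forall y, W y -> xi y = eta y)
  k h : chain F W k h -> (k <= length L)%nat.
Proof.
  intros [HF [Hend Hstep]].
  set (c := fun j => cnt (fun eta : X -> R => forall y, W y -> eta y <= h j y) L).
  assert (Hc : forall j, (j <= k)%nat -> (j <= c j)%nat).
  { induction j as [|j IH]; intros Hj. lia.
    assert (c j < c (S j))%nat.
    { destruct (Hstep j ltac:(lia)) as [Hle [y0 [Wy0 Hlt]]].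
      destruct (Hfin (h (S j)) (HF (S j) Hj)) as [eta [Hin Heta]].
      apply (cnt_strict _ _ L eta).
      - intros e He y Wy. specialize (He y Wy). specialize (Hle y Wy). lra.
      - exact Hin.
      - intros y Wy. rewrite <- (Heta y Wy). lra.
      - intros Hc. specialize (Hc y0 Wy0). rewrite <- (Heta y0 Wy0) in Hc. lra. }
    specialize (IH ltac:(lia)). lia. }
  specialize (Hc k (le_n k)).
  pose proof (cnt_le_len (fun eta : X -> R => forall y, W y -> eta y <= h k y) L).
  unfold c in Hc. lia.
Qed.

Lemma chain_insert {X} (F : (X->R)->Prop) (W : X -> Prop) k h i c :
  chain F W k h -> (i < k)%nat -> F c ->
  (forall y, W y -> h i y <= c y <= h (S i) y) ->
  (exists y, W y /\ h i y < c y) -> (exists y, W y /\ c y < h (S i) y) ->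
  chain F W (S k) (fun j => if le_lt_dec j i then h j
                            else if Nat.eq_dec j (S i) then c else h (pred j)).
Proof.
  intros [HF [Hend Hstep]] Hik Fc Hbtw Hlo Hhi. split; [|split].
  - intros j Hj. destruct (le_lt_dec j i). apply HF; lia.
    destruct (Nat.eq_dec j (S i)). auto. apply HF; lia.
  - intros y Wy. destruct (le_lt_dec 0 i); [|lia]. destruct (le_lt_dec (S k) i); [lia|].
    destruct (Nat.eq_dec (S k) (S i)); [lia|]. simpl. apply Hend; auto.
  - intros j Hj. destruct (le_lt_dec j i) as [H1|H1].
    + destruct (le_lt_dec (S j) i) as [H2|H2].
      * apply Hstep; lia.
      * assert (j = i) by lia. subst j. destruct (Nat.eq_dec (S i) (S i)); [|lia]. split.
        { intros y Wy; apply Hbtw; auto. } exact Hlo.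
    + destruct (le_lt_dec (S j) i); [lia|]. destruct (Nat.eq_dec j (S i)) as [E|E].
      * subst j. destruct (Nat.eq_dec (S (S i)) (S i)); [lia|]. simpl. split.
        { intros y Wy; apply Hbtw; auto. }
        destruct Hhi as [y [Wy Hy]]; exists y; split; auto.
      * destruct (Nat.eq_dec (S j) (S i)); [lia|].
        destruct j as [|j']; [lia|]. simpl. apply Hstep; lia.
Qed.

Ltac rdes := repeat match goal with |- context [Rle_dec ?x ?y] => destruct (Rle_dec x y) end.

Lemma clamp1 a l u : l <= u -> l <= Rmin (Rmax a l) u <= u.
Proof. unfold Rmin, Rmax. destruct (Rle_dec a l); rdes; intros; lra. Qed.
Lemma clamp2 a l u : l < u -> Rmin (Rmax a l) u <= l -> a <= l.
Proof. unfold Rmin, Rmax. destruct (Rle_dec a l); rdes; intros; lra. Qed.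
Lemma clamp3 a l u : l < u -> u <= Rmin (Rmax a l) u -> u <= a.
Proof. unfold Rmin, Rmax. destruct (Rle_dec a l); rdes; intros; lra. Qed.

Lemma nb_below_count (s : nat -> R) (t : R) (i : nat) : forall m,
  (forall j, (1 <= j <= m)%nat -> (s j < t <-> (j <= i)%nat)) -> nb_below m s t = Nat.min m i.
Proof.
  induction m as [|m IH]; intros H; cbn [nb_below]. - reflexivity.
  - rewrite IH by (intros j Hj; apply H; lia).
    destruct (Rlt_dec (s (S m)) t) as [Hl|Hl].
    + apply H in Hl; [|lia]. lia.
    + assert (~ (S m <= i)%nat) by (intro Hc; apply Hl, H; [lia|exact Hc]). lia.
Qed.

Lemma ball_open c eps : R_open (fun r => Rabs (r - c) < eps).
Proof.
  intros r Hr. exists (eps - Rabs (r - c)). split; [lra|]. intros z Hz.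
  assert (Rabs (z - c) <= Rabs (z - r) + Rabs (r - c)).
  { replace (z - c) with ((z - r) + (r - c)) by ring. apply Rabs_triang. } lra.
Qed.

Lemma my_choice {T U} (P : T -> U -> Prop) : (forall t, exists u, P t u) -> exists g, forall t, P t (g t).
Proof.
  intro H. exists (fun t => proj1_sig (constructive_indefinite_description _ (H t))).
  intro t. exact (proj2_sig (constructive_indefinite_description _ (H t))).
Qed.

Theorem lemma5p6 (X : Type) (OX : (X -> Prop) -> Prop)
  (HX : is_topology OX) (Hmet : metrizable OX)
  (A : Type) (plus : A -> A -> A) (opp : A -> A) (zero : A)
  (OA : (A -> Prop) -> Prop)
  (HA : hausdorff_top_abelian_group plus opp zero OA)
  (f : X -> R -> A) (Hf : semi_layered OX OA f) :
  (forall x, in_EA zero (curryEA zero f x)) /\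
  (forall U, EA_open zero OA U -> OX (fun x => U (curryEA zero f x))).
Proof.
  destruct Hf as [F [[Hcont [F0 [F1 Hlf]]] [HLc Hwed]]].
  pose proof HX as [Htop [Hint [Hunion Hext]]].
  assert (Hb : forall xi, F xi -> forall x, 0 <= xi x <= 1) by (intros; apply Hcont; auto).
  assert (Hmax : forall xi eta, F xi -> F eta -> F (fun x => Rmax (xi x) (eta x))) by apply HLc.
  assert (Hmin : forall xi eta, F xi -> F eta -> F (fun x => Rmin (xi x) (eta x))) by apply HLc.
  assert (Hloc : forall x, exists n (sy : X -> nat -> R) (ay : X -> nat -> A) W,
     OX W /\ W x /\
     (forall y, W y -> in_simplex n (sy y) /\ curryEA zero f y = phi zero n (sy y) (ay y)) /\
     (forall j, (j <= n)%nat -> continuous OX R_open (fun y => sy y j)) /\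
     (forall i V, (i <= n)%nat -> OA V -> V (ay x i) ->
        exists O, OX O /\ O x /\ forall y, O y -> V (ay y i))).
  { intro x. destruct (Hlf x) as [W [HW [Wx [L Hfin]]]].
    assert (Hex : exists m, (exists h, chain F W (S m) h) /\
                  forall m', (exists h, chain F W (S m') h) -> (m' <= m)%nat).
    { apply (nat_max_exists _ (length L)).
      - intros m [h Hh]. apply (chain_bound F W L Hfin) in Hh. lia.
      - exists 0%nat. exists (fun j => if Nat.eq_dec j 0 then (fun _ => 0) else (fun _ => 1)).
        split; [|split].
        + intros j Hj. destruct (Nat.eq_dec j 0); auto.
        + intros y Wy. destruct (Nat.eq_dec 0 0); [|lia]. destruct (Nat.eq_dec 1 0); [lia|]. auto.
        + intros j Hj. assert (j = 0%nat) by lia. subst.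
          destruct (Nat.eq_dec 0 0); [|lia]. destruct (Nat.eq_dec 1 0); [lia|].
          split. intros; lra. exists x; split; auto; lra. }
    destruct Hex as [n [[h Hch] Hmaxn]].
    pose proof Hch as [HhF [Hhend Hhstep]].
    assert (Hsand : forall i xi, (i <= n)%nat -> F xi ->
       (forall y, W y -> h i y < h (S i) y -> xi y <= h i y) \/
       (forall y, W y -> h i y < h (S i) y -> h (S i) y <= xi y)).
    { intros i xi Hi Fxi.
      set (c := fun y => Rmin (Rmax (xi y) (h i y)) (h (S i) y)).
      assert (Fc : F c).
      { apply Hmin; [apply Hmax|]; [auto|apply HhF; lia|apply HhF; lia]. }
      assert (Hbtw : forall y, W y -> h i y <= c y <= h (S i) y).
      { intros y Wy. destruct (Hhstep i ltac:(lia)) as [Hle _]. apply clamp1. auto. }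
      destruct (classic (exists y, W y /\ h i y < c y)) as [Hlo|Hlo].
      - destruct (classic (exists y, W y /\ c y < h (S i) y)) as [Hhi|Hhi].
        + exfalso.
          pose proof (chain_insert F W (S n) h i c Hch ltac:(lia) Fc Hbtw Hlo Hhi) as Hc2.
          specialize (Hmaxn (S n) (ex_intro _ _ Hc2)). lia.
        + right. intros y Wy Hlt. assert (~ c y < h (S i) y) by (intro; apply Hhi; eauto).
          apply (clamp3 (xi y) (h i y)); auto. unfold c in H. lra.
      - left. intros y Wy Hlt. assert (~ h i y < c y) by (intro; apply Hlo; eauto).
        apply (clamp2 (xi y) (h i y) (h (S i) y)); auto. unfold c in H. lra. }
    assert (Hlay : forall i, exists p : (X -> A) * (X -> Prop),
      (i <= n)%nat ->
      continuous_on OX OA (snd p) (fst p) /\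
      (forall z, ~ snd p z -> exists N, OX N /\ N z /\ forall y, N y -> ~ snd p y) /\
      (forall y t, W y -> h i y < t <= h (S i) y -> snd p y /\ f y t = fst p y)).
    { intro i. destruct (le_lt_dec i n) as [Hi|Hi];
        [|exists (fun _ => zero, fun _ => False); intros; lia].
      destruct (classic (exists y0, W y0 /\ h i y0 < h (S i) y0)) as [[y0 [Wy0 Hy0]]|Hno].
      2:{ exists (fun _ => zero, fun _ => False). intros _. simpl. split; [|split].
          - intros V _. exists (fun _ => True). split; [exact Htop| intros ? []].
          - intros z _. exists (fun _ => True). split; [exact Htop|split; auto].
          - intros y t Wy Ht. exfalso. apply Hno. exists y. split; auto; lra. }
      set (t0 := h (S i) y0).
      destruct (sup_in F HLc Hb (fun xi => F xi /\ xi y0 < t0)) with (p0 := h i)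
        as [Lo [FLo [HLo1 HLo2]]].
      { intros xi [? ?]; auto. }
      { intros a b [Fa Ha] [Fb Hb']. split. apply Hmax; auto. apply Rmax_lub_lt; auto. }
      { split. apply HhF; lia. unfold t0; lra. }
      destruct (inf_in F HLc Hb (fun xi => F xi /\ t0 <= xi y0)) with (p0 := h (S i))
        as [Hi' [FHi [HHi1 HHi2]]].
      { intros xi [? ?]; auto. }
      { intros a b [Fa Ha] [Fb Hb']. split. apply Hmin; auto. apply Rmin_glb; auto. }
      { split. apply HhF; lia. unfold t0; lra. }
      assert (HLoh : forall y, W y -> h i y < h (S i) y -> Lo y <= h i y).
      { intros y Wy Hy. apply HLo2. intros xi [Fxi Hxi]. destruct (Hsand i xi Hi Fxi) as [H|H].
        - apply H; auto.
        - exfalso. specialize (H y0 Wy0 Hy0). unfold t0 in Hxi. lra. }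
      assert (HHih : forall y, W y -> h i y < h (S i) y -> h (S i) y <= Hi' y).
      { intros y Wy Hy. apply HHi2. intros xi [Fxi Hxi]. destruct (Hsand i xi Hi Fxi) as [H|H].
        - exfalso. specialize (H y0 Wy0 Hy0). unfold t0 in Hxi. lra.
        - apply H; auto. }
      assert (Hminw : minimal_wedge F Lo Hi').
      { split.
        - exists y0, t0. unfold wedge. specialize (HLoh y0 Wy0 Hy0).
          specialize (HHih y0 Wy0 Hy0). unfold t0 in *; lra.
        - intros e1 e2 Fe1 Fe2 [x' [t' Hw']] Hsub x1 t1 Hw1.
          pose proof (Hsub x' t' Hw') as Hw''. unfold wedge in *.
          destruct (Rlt_le_dec (e1 y0) t0) as [He1|He1].
          + pose proof (HLo1 e1 (conj Fe1 He1)) as Le1.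
            destruct (Rlt_le_dec (e2 y0) t0) as [He2|He2].
            * pose proof (HLo1 e2 (conj Fe2 He2) x'). lra.
            * pose proof (HHi1 e2 (conj Fe2 He2) x1). pose proof (Le1 x1). lra.
          + pose proof (HHi1 e1 (conj Fe1 He1) x'). lra. }
      destruct (Hwed Lo Hi' FLo FHi Hminw) as [fC [HfC1 HfC2]].
      exists (fC, closure OX (wedge_proj Lo Hi')). intros _. simpl. split; [exact HfC1|split].
      - intros z Hz.
        destruct (classic (exists N, OX N /\ N z /\ forall y, N y -> ~ wedge_proj Lo Hi' y))
          as [[N [HN [Nz HNp]]]|Hno'].
        + exists N. split; [auto|split; auto]. intros y Ny Cy.
          destruct (Cy N HN Ny) as [w [Nw Pw]]. exact (HNp w Nw Pw).
        + exfalso. apply Hz. intros U0 HU0 U0z. apply NNPP. intro Hne. apply Hno'.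
          exists U0. split; [auto|split; auto]. intros y U0y Py. apply Hne. exists y; auto.
      - intros y t Wy Ht.
        assert (Hw : wedge Lo Hi' y t).
        { unfold wedge. pose proof (HLoh y Wy ltac:(lra)). pose proof (HHih y Wy ltac:(lra)). lra. }
        split.
        + intros U0 HU0 U0y. exists y. split; auto. exists t; auto.
        + apply HfC2; auto. }
    destruct (my_choice _ Hlay) as [pk Hpk].
    set (a0 := fun i => if excluded_middle_informative (snd (pk i) x) then fst (pk i) x else zero).
    set (ay := fun y i => if excluded_middle_informative (snd (pk i) y) then fst (pk i) y else a0 i).
    exists n, (fun y j => h j y), ay, W.
    split; [exact HW|split; [exact Wx|split; [|split]]].
    - intros y Wy. split.
      + unfold in_simplex; cbv beta. split.
        * intros j Hj. apply Hb. apply HhF. lia.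
        * intros j Hj. apply (Hhstep j ltac:(lia)). exact Wy.
      + apply functional_extensionality. intro t. unfold curryEA, phi, restrictI.
        destruct (Rlt_dec 0 t) as [Ht0|]; [|reflexivity].
        destruct (Rle_dec t 1) as [Ht1|]; [|reflexivity].
        destruct (nat_max_exists (fun i => (i <= S n)%nat /\ h i y < t) (S n))
          as [i [[Hi1 Hi2] Himax]].
        { intros k [? ?]; auto. }
        { exists 0%nat. split. lia. destruct (Hhend y Wy) as [-> _]; lra. }
        assert (Hin : (i <= n)%nat).
        { destruct (Nat.eq_dec i (S n)); [|lia]. subst. destruct (Hhend y Wy) as [_ E]. lra. }
        assert (Hmono : forall j j', (j <= j' <= S n)%nat -> h j y <= h j' y).
        { intros j j' Hjj. induction j' as [|j' IH].
          - assert (j = 0%nat) by lia; subst; lra.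
          - destruct (Nat.eq_dec j (S j')). subst; lra.
            pose proof (proj1 (Hhstep j' ltac:(lia)) y Wy). specialize (IH ltac:(lia)). lra. }
        assert (HSi : t <= h (S i) y).
        { apply Rnot_lt_le. intro Hc. assert (Hle : (S i <= S n)%nat) by lia. specialize (Himax (S i) (conj Hle Hc)). lia. }
        cbv beta.
        rewrite (nb_below_count _ t i n).
        2:{ intros j Hj. split; intro Hc.
            - apply Nat.nlt_ge. intro Hc'. pose proof (Hmono (S i) j ltac:(lia)). lra.
            - pose proof (Hmono j i ltac:(lia)). lra. }
        replace (Nat.min n i) with i by lia.
        destruct (Hpk i Hin) as [_ [_ Hl]]. destruct (Hl y t Wy (conj Hi2 HSi)) as [Cy Eq].
        unfold ay. destruct (excluded_middle_informative (snd (pk i) y)); [exact Eq|contradiction].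
    - intros j Hj. exact (proj1 (Hcont _ (HhF j ltac:(lia)))).
    - intros i V Hi HV Vx.
      destruct (Hpk i Hi) as [Hc [Hcl _]].
      assert (Eqx : ay x i = a0 i).
      { unfold ay, a0. destruct (excluded_middle_informative (snd (pk i) x)); reflexivity. }
      rewrite Eqx in Vx.
      destruct (excluded_middle_informative (snd (pk i) x)) as [Cx|Cx].
      + destruct (Hc V HV) as [O [HO HOeq]].
        assert (Ea : a0 i = fst (pk i) x).
        { unfold a0. destruct (excluded_middle_informative (snd (pk i) x)); [reflexivity|contradiction]. }
        exists O. split; [exact HO|split].
        * apply (HOeq x Cx). rewrite <- Ea; exact Vx.
        * intros y Oy. unfold ay. destruct (excluded_middle_informative (snd (pk i) y)) as [Cy|Cy].
          { apply (HOeq y Cy); exact Oy. } { exact Vx. }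
      + destruct (Hcl x Cx) as [N [HN [Nx HNn]]]. exists N. split; [exact HN|split; [exact Nx|]].
        intros y Ny. unfold ay.
        destruct (excluded_middle_informative (snd (pk i) y)) as [Cy|Cy];
          [exfalso; exact (HNn y Ny Cy)|exact Vx]. }
  split.
  - intro x. destruct (Hloc x) as [n [sy [ay [W [HW [Wx [Hrep _]]]]]]].
    destruct (Hrep x Wx) as [Hs Heq]. exists n, (sy x), (ay x). split; auto.
    intro t. rewrite Heq. reflexivity.
  - intros U HU.
    apply (Hext (fun x => exists O, (OX O /\ forall y, O y -> U (curryEA zero f y)) /\ O x)).
    + apply (Hunion (fun O => OX O /\ forall y, O y -> U (curryEA zero f y))).
      intros O [HO _]; exact HO.
    + intro x. split.
      * intros [O [[_ HOU] Ox]]. auto.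
      * intro Hx. destruct (Hloc x) as [n [sy [ay [W [HW [Wx [Hrep [Hsc Hac]]]]]]]].
        destruct (Hrep x Wx) as [Hsx Heqx].
        assert (HPx : U (phi zero n (sy x) (ay x))) by (rewrite <- Heqx; exact Hx).
        destruct (HU n (sy x) (ay x) Hsx HPx) as [eps [V [Heps [HV Himpl]]]].
        destruct (fin_inter OX HX x (fun i y => ((1 <= i)%nat -> Rabs (sy y i - sy x i) < eps)
                                               /\ V i (ay y i)) n) as [O [HO [Ox HOP]]].
        { intros i Hi. destruct (HV i Hi) as [HVi Vxi].
          destruct (Hac i (V i) Hi HVi Vxi) as [O2 [HO2 [O2x HO2P]]].
          assert (HO1 : OX (fun y => Rabs (sy y i - sy x i) < eps)).
          { apply (Hsc i Hi (fun r => Rabs (r - sy x i) < eps)). apply ball_open. }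
          exists (fun y => Rabs (sy y i - sy x i) < eps /\ O2 y).
          split; [apply Hint; auto|split].
          - split; auto. unfold Rminus. rewrite Rplus_opp_r, Rabs_R0. lra.
          - intros y [H1 H2]. split; auto. }
        exists (fun y => O y /\ W y). split; [split|].
        -- apply Hint; auto.
        -- intros y [Oy Wy]. destruct (Hrep y Wy) as [Hsy Heqy]. rewrite Heqy.
           apply Himpl; auto.
           ++ intros j Hj. apply (HOP y Oy j ltac:(lia)). lia.
           ++ intros j Hj. apply (HOP y Oy j Hj).
        -- split; auto.
Qed.
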